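(* Let $(\mathcal{S},\mathcal{A},P,r,\gamma)$ be a discounted Markov decision process with finite state set $\mathcal{S}$ of size $n$, finite action set $\mathcal{A}$, transition probabilities $P(s'\mid s,a)$, expected rewards $r(s,a)$ and discount factor $\gamma\in[0,1)$. Let $V^*$ be the optimal value function and suppose: (i) (uniqueness of the optimal policy) there is a deterministic policy $\pi^*$ and a number $\delta>0$ such that for every state $s$ and every action $a'\neq \pi^*(s)$, $$ r(s,\pi^*(s))+\gamma\sum_{s'}P(s'\mid s,\pi^*(s))V^*(s') - r(s,a') - \gamma\sum_{s'}P(s'\mid s,a')V^*(s') \ge \delta;$$ (ii) the Markov chain with transition matrix $P^*(s,s')=P(s'\mid s,\pi^*(s))$ is irreducible and aperiodic. Let $N\ge 1$ be an integer such that all entries of $(P^* )^N$ are strictly positive. Run synchronous value iteration without learning rate from an initial vector $V_0\in\mathbb{R}^{\mathcal{S}}$, i.e. $V_{t+1}(s)=\max_{a}\big[r(s,a)+\gamma\sum_{s'}P(s'\mid s,a)V_t(s')\big]$ for all $s$, and let $e_t=V_t-V^*$. Then there exists $\tau\in(0,1)$ such that $$\operatorname{span}(e_N)\le \gamma^N\,\tau\,\operatorname{span}(e_0).$$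
   Context: For a vector $e\in\mathbb{R}^{\mathcal{S}}$, $\operatorname{span}(e)=\max_s e(s)-\min_s e(s)$. The optimal value function is $V^*(s)=\max_\pi \mathbb{E}\big[\sum_{t\ge0}\gamma^t r(s_t,\pi(s_t))\mid s_0=s\big]$. Such an $N$ exists under (ii) (e.g. $N=n^2-2n+2$ works). The constant $\tau$ may depend on the MDP and on the initial vector $V_0$. *)

(* Defs.v *)
From HB Require Import structures.
From mathcomp Require Import all_boot all_order all_algebra.
From mathcomp Require Import all_classical all_reals all_analysis.
Set Implicit Arguments. Unset Strict Implicit. Unset Printing Implicit Defensive.
Import Order.TTheory GRing.Theory Num.Theory numFieldNormedType.Exports.
Local Open Scope ring_scope.
Local Open Scope classical_set_scope.

Section MDP.
Variables (R : realType) (n : nat) (A : finType).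
(* states are 'I_n; P s a s' = P(s' | s, a); r s a = r(s, a) *)
Variables (P : 'I_n -> A -> 'I_n -> R) (r : 'I_n -> A -> R) (gamma : R).

Definition spanR (e : 'I_n -> R) : R := sup (range e) - inf (range e).

Definition Ppi (pi : {ffun 'I_n -> A}) : 'M[R]_n := \matrix_(i, j) P i (pi i) j.
Definition rpi (pi : {ffun 'I_n -> A}) : 'cV[R]_n := \col_i r i (pi i).

(* value of policy pi: V^pi(s) = sum_{t>=0} gamma^t E[r(s_t, pi(s_t)) | s_0 = s]
   where E[r(s_t,pi(s_t)) | s_0 = s] = ((P_pi)^t r_pi)(s). *)
Definition Vpi (pi : {ffun 'I_n -> A}) (s : 'I_n) : R :=
  limn (series ((fun t : nat => gamma ^+ t * ((Ppi pi ^+ t) *m rpi pi) s ord0) : R^nat)).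

Definition Vstar (s : 'I_n) : R := sup (range (fun pi : {ffun 'I_n -> A} => Vpi pi s)).

Definition Qval (V : 'I_n -> R) (s : 'I_n) (a : A) : R :=
  r s a + gamma * \sum_(s' < n) P s a s' * V s'.

Definition bellman (V : 'I_n -> R) : 'I_n -> R :=
  fun s => sup (range (fun a : A => Qval V s a)).

Definition VI (V0 : 'I_n -> R) (t : nat) : 'I_n -> R := iter t bellman V0.

End MDP.

Definition irreducible (R : realType) (n : nat) (M : 'M[R]_n) : Prop :=
  forall i j : 'I_n, exists k : nat, 0 < (M ^+ k) i j.

Definition aperiodic (R : realType) (n : nat) (M : 'M[R]_n) : Prop :=
  forall i : 'I_n, forall d : nat,
    (forall k : nat, (0 < k)%N -> 0 < (M ^+ k) i i -> (d %| k)%N) -> d = 1%N.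

(* Main.v *)
Require Import Defs.
From HB Require Import structures.
From mathcomp Require Import all_boot all_order all_algebra.
From mathcomp Require Import all_classical all_reals all_analysis.
From mathcomp Require Import ring lra.
Import Order.TTheory GRing.Theory Num.Theory numFieldNormedType.Exports.
Local Open Scope ring_scope.
Local Open Scope classical_set_scope.

Lemma fsup_ub {R : realType} {T : finType} (f : T -> R) t : f t <= sup (range f).
Proof.
apply: sup_upper_bound; last by exists t.
split; first by exists (f t), t.
exists (\sum_u `|f u|) => _ [u _ <-].
apply: le_trans (ler_norm _) _.
by rewrite (bigD1 u) //= lerDl sumr_ge0.
Qed.

Lemma fsup_le {R : realType} {T : finType} (f : T -> R) {B : R} (t0 : T) :
  (forall t, f t <= B) -> sup (range f) <= B.
Proof.
move=> H; apply: ge_sup; first by exists (f t0), t0.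
by move=> _ [u _ <-].
Qed.

Lemma finf_lb {R : realType} {T : finType} (f : T -> R) t : inf (range f) <= f t.
Proof.
apply: ge_inf; last by exists t.
exists (- \sum_u `|f u|) => _ [u _ <-].
rewrite lerNl; apply: le_trans (ler_norm (- f u)) _; rewrite normrN.
by rewrite (bigD1 u) //= lerDl sumr_ge0.
Qed.

Lemma finf_ge {R : realType} {T : finType} {f : T -> R} {B : R} (t0 : T) :
  (forall t, B <= f t) -> B <= inf (range f).
Proof.
move=> H; apply: lb_le_inf; first by exists (f t0), t0.
by move=> _ [u _ <-].
Qed.

Lemma stoch_pow (R : realType) (n : nat) (M : 'M[R]_n) :
  (forall i j, 0 <= M i j) -> (forall i, \sum_j M i j = 1) ->
  forall t, (forall i j, 0 <= (M ^+ t) i j) /\ (forall i, \sum_j (M ^+ t) i j = 1).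
Proof.
move=> H0 H1; elim=> [|t [IH0 IH1]].
  rewrite expr0; split => [i j|i]; first by rewrite mxE ler0n.
  rewrite (bigD1 i) //= mxE eqxx big1 ?addr0 // => j /negPf; rewrite mxE eq_sym => ->.
  by [].
rewrite exprS -mulmxE; split => [i j|i].
  by rewrite mxE sumr_ge0 // => k _; rewrite mulr_ge0.
under eq_bigr do rewrite mxE.
rewrite exchange_big /=.
under eq_bigr do rewrite -mulr_sumr IH1 mulr1.
exact: H1.
Qed.

Lemma stoch_le1 (R : realType) (n : nat) (M : 'M[R]_n) i j :
  (forall i j, 0 <= M i j) -> (forall i, \sum_j M i j = 1) -> M i j <= 1.
Proof.
move=> H0 H1; rewrite -(H1 i) (bigD1 j) //= lerDl sumr_ge0 //.
Qed.

Lemma Vpi_eq (R : realType) (n : nat) (A : finType)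
  (P : 'I_n -> A -> 'I_n -> R) (r : 'I_n -> A -> R) (gamma : R)
  (HP0 : forall s a s', 0 <= P s a s')
  (HP1 : forall s a, \sum_(s' < n) P s a s' = 1)
  (Hg0 : 0 <= gamma) (Hg1 : gamma < 1) (pi : {ffun 'I_n -> A}) (s : 'I_n) :
  Vpi P r gamma pi s = Qval P r gamma (Vpi P r gamma pi) s (pi s).
Proof.
set M := Ppi P pi; set v := rpi r pi.
have M0 : forall i j, 0 <= M i j by move=> i j; rewrite mxE.
have M1 : forall i, \sum_j M i j = 1.
  by move=> i; under eq_bigr do rewrite mxE; exact: HP1.
have st := @stoch_pow _ _ M M0 M1.
pose u := fun (s : 'I_n) (t : nat) => gamma ^+ t * ((M ^+ t *m v) s ord0).
have cv : forall j, cvgn (series (u j)).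
  move=> j; apply: normed_cvg.
  pose B := \sum_k `|r k (pi k)|.
  apply: (@series_le_cvg _ (fun t => `|u j t|) (geometric B gamma)).
  - by move=> t; rewrite normr_ge0.
  - by move=> t; rewrite /geometric /= mulr_ge0 ?sumr_ge0 ?exprn_ge0.
  - move=> t; rewrite /geometric /= /u normrM ger0_norm ?exprn_ge0 // mulrC.
    apply: ler_wpM2r; first exact: exprn_ge0.
    rewrite mxE; apply: le_trans (ler_norm_sum _ _ _) _.
    apply: ler_sum => k _; rewrite normrM ger0_norm ?(proj1 (st t)) // mxE.
    apply: ler_piMl => //; exact: (@stoch_le1 _ _ _ _ _ (proj1 (st t)) (proj2 (st t))).
  - by apply: is_cvg_geometric_series; rewrite ger0_norm.
have shift : forall k, series (u s) k.+1 =
    r s (pi s) + gamma * \sum_j P s (pi s) j * series (u j) k.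
  move=> k; rewrite /series /= big_nat_recl //.
  rewrite /u expr0 mul1r expr0 mul1mx mxE; congr (_ + _).
  have us : forall t, gamma ^+ t.+1 * ((M ^+ t.+1 *m v) s ord0) =
      gamma * \sum_j P s (pi s) j * (gamma ^+ t * ((M ^+ t *m v) j ord0)).
    move=> t; rewrite [gamma ^+ _]exprS [M ^+ _]exprS -mulmxE -mulmxA mxE -mulrA !mulr_sumr.
    apply: eq_bigr => j _; rewrite [M s j]mxE; ring.
  under eq_bigr do rewrite us.
  rewrite -mulr_sumr; congr (_ * _); rewrite exchange_big /=.
  by apply: eq_bigr => j _; rewrite mulr_sumr.
have L1 : [sequence series (u s) k.+1]_k @ \oo --> limn (series (u s)).
  by rewrite cvg_shiftS; exact: cv.
have L2 : [sequence series (u s) k.+1]_k @ \oo -->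
    r s (pi s) + gamma * \sum_j P s (pi s) j * limn (series (u j)).
  have -> : [sequence series (u s) k.+1]_k =
      (fun k => r s (pi s) + gamma * \sum_j P s (pi s) j * series (u j) k).
    by apply/funext => k; rewrite /= shift.
  apply: cvgD; first exact: cvg_cst.
  apply: cvgM; first exact: cvg_cst.
  have := @cvg_big R 'I_n +%R 0 predT (add_continuous : continuous (fun z : R * R => z.1 + z.2)) nat \oo
    (index_enum 'I_n) (fun j k => P s (pi s) j * series (u j) k)
    (fun j => P s (pi s) j * limn (series (u j))) _.
  apply => j _.
  apply: cvgM; first exact: cvg_cst.
  exact: cv.
rewrite /Qval /Vpi -/M -/v.
have E1 := cvg_lim (@norm_hausdorff _ _) L1.
have E2 := cvg_lim (@norm_hausdorff _ _) L2.
rewrite -/(u s) -E1 E2.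
by [].
Qed.

Theorem theorem1 (R : realType) (n : nat) (A : finType)
  (P : 'I_n -> A -> 'I_n -> R) (r : 'I_n -> A -> R) (gamma : R)
  (HA : (0 < #|A|)%N)
  (HP0 : forall s a s', 0 <= P s a s')
  (HP1 : forall s a, \sum_(s' < n) P s a s' = 1)
  (Hg0 : 0 <= gamma) (Hg1 : gamma < 1)
  (pistar : {ffun 'I_n -> A}) (delta : R) (Hdelta : 0 < delta)
  (Hgap : forall (s : 'I_n) (a' : A), a' != pistar s ->
     Qval P r gamma (Vstar P r gamma) s (pistar s)
       - Qval P r gamma (Vstar P r gamma) s a' >= delta)
  (Hirr : irreducible (Ppi P pistar))
  (Haper : aperiodic (Ppi P pistar))
  (N : nat) (HN : (1 <= N)%N)
  (HNpos : forall i j : 'I_n, 0 < ((Ppi P pistar) ^+ N) i j)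
  (V0 : 'I_n -> R) :
  let e := fun t : nat => fun s : 'I_n => VI P r gamma V0 t s - Vstar P r gamma s in
  exists tau : R, 0 < tau /\ tau < 1 /\
    spanR (e N) <= gamma ^+ N * tau * spanR (e 0%N).
Proof.
move=> e.
have [n0|npos] := posnP n.
  have sp0 : forall f : 'I_n -> R, spanR f = 0.
    move=> f; rewrite /spanR; have -> : range f = set0.
      by apply/seteqP; split => // x [i]; have := ltn_ord i; rewrite {2}n0.
    by rewrite sup0 inf0 subr0.
  exists (2^-1); rewrite !sp0 mulr0; split; [|split] => //.
  by rewrite invf_lt1 // ltr1n.
have Vpe := @Vpi_eq _ _ _ P r gamma HP0 HP1 Hg0 Hg1.
set Vs := Vstar P r gamma.
have Qd : forall V W s a, Qval P r gamma V s a - Qval P r gamma W s a =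
    gamma * \sum_j P s a j * (V j - W j).
  move=> V W s a; rewrite /Qval.
  under [X in _ = gamma * X]eq_bigr do rewrite mulrBr.
  rewrite sumrB; ring.
have Qmono : forall V W s a, (forall j, V j <= W j) ->
    Qval P r gamma V s a <= Qval P r gamma W s a.
  move=> V W s a H; rewrite -subr_ge0 Qd mulr_ge0 // sumr_ge0 // => j _.
  by rewrite mulr_ge0 // subr_ge0.
have Qgreedy : forall s a, Qval P r gamma Vs s a <= Qval P r gamma Vs s (pistar s).
  move=> s a; case: (eqVneq a (pistar s)) => [->//|/Hgap H]; lra.
have VS1 : forall pi s, Vpi P r gamma pi s <= Vs s.
  move=> pi s; rewrite /Vs /Vstar. exact: (fsup_ub (fun pi => Vpi P r gamma pi s) pi).
have VS2 : forall s, Vs s <= Qval P r gamma Vs s (pistar s).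
  move=> s; rewrite {1}/Vs /Vstar; apply: (fsup_le _ pistar) => pi.
  rewrite Vpe; apply: le_trans (Qgreedy s (pi s)).
  by apply: Qmono => j; exact: VS1.
have VS3 : forall s, Qval P r gamma Vs s (pistar s) <= Vs s.
  move=> s.
  pose d j := Vpi P r gamma pistar j - Vs j.
  have dge : forall j, gamma * inf (range d) <= d j.
    move=> j.
    have H : Qval P r gamma (Vpi P r gamma pistar) j (pistar j)
       - Qval P r gamma Vs j (pistar j) <= d j.
      by rewrite /d [Vpi P r gamma pistar j]Vpe lerD2l lerN2 VS2.
    apply: le_trans H; rewrite Qd; apply: ler_wpM2l => //.
    rewrite -[inf _]mul1r -(HP1 j (pistar j)) mulr_suml.
    apply: ler_sum => k _; apply: ler_wpM2l => //; exact: finf_lb.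
  have m0 : 0 <= inf (range d).
    have := finf_ge s dge; nra.
  apply: le_trans (_ : Qval P r gamma (Vpi P r gamma pistar) s (pistar s) <= _).
    apply: Qmono => j; have := finf_lb d j; rewrite /d; lra.
  by rewrite -Vpe.
have Vfix : forall s, Vs s = Qval P r gamma Vs s (pistar s).
  by move=> s; apply/eqP; rewrite eq_le VS2 VS3.
have Vub : forall s a, Qval P r gamma Vs s a <= Vs s.
  by move=> s a; rewrite Vfix; apply: Qgreedy.
have bell_ub : forall V s B, (forall a, Qval P r gamma V s a <= B) ->
    bellman P r gamma V s <= B.
  by move=> V s B H; exact: (fsup_le _ (pistar s)).
have bell_lb : forall V s a, Qval P r gamma V s a <= bellman P r gamma V s.
  by move=> V s a; exact: (fsup_ub (fun a => Qval P r gamma V s a)).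
have eE : forall t s, e t s = VI P r gamma V0 t s - Vs s by [].
have VIS : forall t, VI P r gamma V0 t.+1 = bellman P r gamma (VI P r gamma V0 t) by [].
set S := sup (range (e 0%N)); set I := inf (range (e 0%N)).
set M := Ppi P pistar; set col0 := \col_j e 0%N j.
have UB : forall t s, e t s <= gamma ^+ t * S.
  elim=> [|t IH] s; first by rewrite expr0 mul1r; exact: fsup_ub.
  rewrite eE VIS lerBlDr; apply: bell_ub => a.
  have step : gamma * \sum_j P s a j * (VI P r gamma V0 t j - Vs j) <= gamma ^+ t.+1 * S.
    rewrite exprS -mulrA; apply: ler_wpM2l => //.
    rewrite -[gamma ^+ t * S]mul1r -(HP1 s a) mulr_suml.
    by apply: ler_sum => j _; apply: ler_wpM2l => //; exact: IH.
  have h1 := Qd (VI P r gamma V0 t) Vs s a; have h2 := Vub s a; lra.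
have LB : forall t s, gamma ^+ t * ((M ^+ t *m col0) s ord0) <= e t s.
  elim=> [|t IH] s; first by rewrite expr0 mul1r mul1mx mxE.
  rewrite [gamma ^+ _]exprS [M ^+ _]exprS -mulmxE -mulmxA mxE -mulrA mulr_sumr.
  apply: le_trans (_ : gamma * \sum_j P s (pistar s) j * e t j <= _).
    apply: ler_wpM2l => //; apply: ler_sum => j _.
    rewrite [M s j]mxE mulrCA; apply: ler_wpM2l => //; exact: IH.
  have h1 := Qd (VI P r gamma V0 t) Vs s (pistar s).
  have h2 := bell_lb (VI P r gamma V0 t) s (pistar s).
  have h3 := Vfix s.
  rewrite eE VIS. 
  have -> : \sum_j P s (pistar s) j * e t j =
     \sum_j P s (pistar s) j * (VI P r gamma V0 t j - Vs j) by [].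
  lra.
set Q := M ^+ N.
have M0 : forall i j, 0 <= M i j by move=> i j; rewrite mxE.
have M1 : forall i, \sum_j M i j = 1.
  by move=> i; under eq_bigr do rewrite mxE; exact: HP1.
have [Q0 Q1] := @stoch_pow _ _ M M0 M1 N.
pose c0 := \big[Num.min/1]_(ij : 'I_n * 'I_n) Q ij.1 ij.2.
have c0pos : 0 < c0.
  rewrite /c0; apply: (big_ind (fun x : R => 0 < x)) => //;
    (try by move=> x y x0 y0; rewrite lt_min x0 y0); (try by move=> ij _; exact: HNpos).
have c0le : forall i j, c0 <= Q i j.
  by move=> i j; rewrite /c0; exact: (bigmin_le 1 (i, j) (fun ij : 'I_n * 'I_n => Q ij.1 ij.2)).
pose c := Num.min c0 (2^-1).
have cpos : 0 < c by rewrite lt_min c0pos invr_gt0 ltr0n.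
have cle : forall i j, c <= Q i j by move=> i j; apply: le_trans (c0le i j); rewrite ge_min lexx.
have chalf : c <= 2^-1 by rewrite ge_min lexx orbT.
pose s0 : 'I_n := Ordinal npos.
have keyQ : forall s, I + c * (S - I) <= (Q *m col0) s ord0.
  move=> s; rewrite mxE.
  have -> : \sum_j Q s j * col0 j ord0 = I + \sum_j Q s j * (e 0%N j - I).
    under [in RHS]eq_bigr do rewrite mulrBr.
    rewrite sumrB -mulr_suml Q1 mul1r.
    under eq_bigr do rewrite mxE.
    ring.
  rewrite lerD2l.
  apply: le_trans (_ : c * \sum_j (e 0%N j - I) <= _).
    apply: ler_wpM2l; first exact: ltW.
    rewrite lerBlDl; apply: (fsup_le _ s) => k.
    rewrite (bigD1 k) //=.
    have : 0 <= \sum_(j | j != k) (e 0%N j - I).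
      by apply: sumr_ge0 => j _; rewrite subr_ge0; exact: finf_lb.
    lra.
  rewrite mulr_sumr; apply: ler_sum => j _; apply: ler_wpM2r.
    by rewrite subr_ge0; exact: finf_lb.
  exact: cle.
exists (1 - c); split; [lra|split; [lra|]].
rewrite /spanR.
have -> : gamma ^+ N * (1 - c) * (sup (range (e 0%N)) - inf (range (e 0%N))) =
   gamma ^+ N * S - gamma ^+ N * (I + c * (S - I)) by rewrite /S /I; ring.
apply: lerB.
  by apply: (fsup_le _ s0) => s; exact: UB.
apply: (finf_ge s0) => s; apply: le_trans (LB N s).
apply: ler_wpM2l; [exact: exprn_ge0 | exact: keyQ].
Qed.
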